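(* Let $\mathbf{A}\in\mathbb{R}^{m_1\times n}$ ($m_1\ge1$), $\mathbf{b}\in\mathbb{R}^{m_1}$, $\mathbf{W}\in\mathbb{R}^{m_2\times n}$, $\mathbf{q}\in\mathbb{R}^{m_2}$, observations $\mathbf{x}^1,\dots,\mathbf{x}^K\in\mathbb{R}^n$ and a constant $M>0$. For an integer $p$ let $\mathbf{IL}(p)$ be the mixed-integer problem in variables $\mathbf{v}\in\{0,1\}^{m_1}$, $\mathbf{z}\in\mathbb{R}^n$, $\mathbf{E}=[\epsilon^1,\dots,\epsilon^K]$: $$\min\ \mathscr{D}(\mathbf{E},\mathbf{A})\ \text{ s.t. }\ \mathbf{b}\le\mathbf{A}\mathbf{z}\le\mathbf{b}+M(\mathbf{1}-\mathbf{v}),\ \mathbf{W}\mathbf{z}\ge\mathbf{q},\ \mathbf{z}=\mathbf{x}^k-\epsilon^k\ \forall k,\ \textstyle\sum_{j=1}^{m_1}v_j=p.$$ If $\mathbf{IL}(p_1)$ and $\mathbf{IL}(p_2)$ are feasible for $p_1,p_2\in\{1,\dots,m_1\}$ with $p_1\le p_2$, and $\mathscr{D}^*_{p_1},\mathscr{D}^*_{p_2}$ denote their optimal objective values, then $\mathscr{D}^*_{p_1}\le\mathscr{D}^*_{p_2}$.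
   Context: Rows of $\mathbf{A}\mathbf{x}\ge\mathbf{b}$ are the relevant constraints; $\mathscr{D}\ge0$ is a user-chosen nonnegative distance measure on $\mathbf{E}$ and $\mathbf{A}$. $M$ is a big-M constant, taken sufficiently large that upper bounds $\mathbf{a}_j\mathbf{z}\le b_j+M$ are not restrictive on the feasible region $\{\mathbf{x}:\mathbf{A}\mathbf{x}\ge\mathbf{b},\mathbf{W}\mathbf{x}\ge\mathbf{q}\}$. *)

(* Defs.v *)
From HB Require Import structures.
From mathcomp Require Import all_boot all_order all_algebra.
From mathcomp Require Import classical_sets reals.
Set Implicit Arguments. Unset Strict Implicit. Unset Printing Implicit Defensive.
Import Order.TTheory GRing.Theory Num.Theory.
Local Open Scope ring_scope.

Definition IL_feasible (R : realType) (m1 m2 n K : nat)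
  (A : 'M[R]_(m1, n)) (b : 'cV[R]_m1) (W : 'M[R]_(m2, n)) (q : 'cV[R]_m2)
  (X : 'M[R]_(n, K)) (M : R) (p : nat)
  (v : 'I_m1 -> bool) (z : 'cV[R]_n) (E : 'M[R]_(n, K)) : Prop :=
  [/\ (forall j : 'I_m1, b j 0 <= (A *m z) j 0),
      (forall j : 'I_m1, (A *m z) j 0 <= b j 0 + M * (1 - (v j)%:R)),
      (forall i : 'I_m2, q i 0 <= (W *m z) i 0),
      (forall k : 'I_K, z = col k X - col k E) &
      (\sum_(j < m1) (v j : nat))%N = p].

Definition IL_values (R : realType) (m1 m2 n K : nat)
  (D : 'M[R]_(n, K) -> 'M[R]_(m1, n) -> R)
  (A : 'M[R]_(m1, n)) (b : 'cV[R]_m1) (W : 'M[R]_(m2, n)) (q : 'cV[R]_m2)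
  (X : 'M[R]_(n, K)) (M : R) (p : nat) : set R :=
  [set d | exists v z E, IL_feasible A b W q X M p v z E /\ d = D E A].

Definition IL_feasible_problem (R : realType) (m1 m2 n K : nat)
  (A : 'M[R]_(m1, n)) (b : 'cV[R]_m1) (W : 'M[R]_(m2, n)) (q : 'cV[R]_m2)
  (X : 'M[R]_(n, K)) (M : R) (p : nat) : Prop :=
  exists v z E, IL_feasible A b W q X M p v z E.

(* Optimal objective value of IL(p): the infimum of the feasible objective values
   (a minimum whenever the optimum is attained). *)
Definition IL_opt (R : realType) (m1 m2 n K : nat)
  (D : 'M[R]_(n, K) -> 'M[R]_(m1, n) -> R)
  (A : 'M[R]_(m1, n)) (b : 'cV[R]_m1) (W : 'M[R]_(m2, n)) (q : 'cV[R]_m2)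
  (X : 'M[R]_(n, K)) (M : R) (p : nat) : R :=
  inf (IL_values D A b W q X M p).

(* Main.v *)
Require Import Defs.
From HB Require Import structures.
From mathcomp Require Import all_boot all_order all_algebra.
From mathcomp Require Import classical_sets reals.
Import Order.TTheory GRing.Theory Num.Theory.
Local Open Scope ring_scope.

Lemma sub_bool (m : nat) (p d : nat) : forall v : 'I_m -> bool,
  (\sum_(j < m) (v j : nat))%N = (p + d)%N ->
  exists v' : 'I_m -> bool, (forall j, v' j -> v j) /\ (\sum_(j < m) (v' j : nat))%N = p.
Proof.
elim: d => [|d IH] v Hv.
  by exists v; split => //; rewrite Hv addn0.
have [j vj] : exists j, v j.
  case: (boolP [exists x, v x]) => [/existsP //|/existsPn H].
  move: Hv; rewrite big1 ?addnS // => i _; by move: (H i) => /negbTE ->.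
set v2 := fun i => v i && (i != j).
have Hs : (\sum_(i < m) (v2 i : nat))%N = (p + d)%N.
  move: Hv; rewrite (bigD1 j) //= [in X in _ -> X](bigD1 j) //= vj.
  rewrite /v2 eqxx andbF /= add0n addnS add1n => -[<-].
  by apply: eq_bigr => i /negbTE ->; rewrite andbT.
have [v' [H1 H2]] := IH v2 Hs.
exists v'; split => // i /H1; rewrite /v2 => /andP[]; done.
Qed.

Theorem proposition5 (R : realType) (m1 m2 n K : nat)
  (A : 'M[R]_(m1, n)) (b : 'cV[R]_m1) (W : 'M[R]_(m2, n)) (q : 'cV[R]_m2)
  (X : 'M[R]_(n, K)) (M : R)
  (D : 'M[R]_(n, K) -> 'M[R]_(m1, n) -> R)
  (p1 p2 : nat) :
  (0 < m1)%N ->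
  0 < M ->
  (forall E A', 0 <= D E A') ->
  (* big-M is not restrictive on {x : A x >= b, W x >= q} *)
  (forall x : 'cV[R]_n,
      (forall j : 'I_m1, b j 0 <= (A *m x) j 0) ->
      (forall i : 'I_m2, q i 0 <= (W *m x) i 0) ->
      forall j : 'I_m1, (A *m x) j 0 <= b j 0 + M) ->
  (1 <= p1)%N -> (p1 <= p2)%N -> (p2 <= m1)%N ->
  IL_feasible_problem A b W q X M p1 ->
  IL_feasible_problem A b W q X M p2 ->
  IL_opt D A b W q X M p1 <= IL_opt D A b W q X M p2.
Proof.
move=> _ _ D0 bigM _ lep _ [v1 [z1 [E1 F1]]] [v2 [z2 [E2 F2]]].
have sub : (IL_values D A b W q X M p2 `<=` IL_values D A b W q X M p1)%classic.
  move=> d [v [z [E [[h1 h2 h3 h4 h5] ->]]]].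
  have [v' [Hv' Hs]] := sub_bool _ p1 (p2 - p1)%N v
    (etrans h5 (esym (subnKC lep))).
  exists v', z, E; split => //; split => // j.
  case Hj: (v' j); first by move: (h2 j); rewrite (Hv' j Hj).
  by rewrite subr0 mulr1; apply: bigM.
apply: lb_le_inf.
  by exists (D E2 A); exists v2, z2, E2.
move=> x /sub Hx.
have hl : has_lbound (IL_values D A b W q X M p1).
  by exists 0 => y [v [z [E [_ ->]]]].
exact: (ge_inf hl).
Qed.
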